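(* Let $A>0$. For all $C_0,C_1\in B_i(S^1,\mathbb R^2)$, $$\sqrt{\ell(C_1)}-\sqrt{\ell(C_0)}\le\frac{1}{2\sqrt A}\,\mathrm{dist}^{B_i}_{G^A}(C_0,C_1).$$
   Context: $S^1=\mathbb R/2\pi\mathbb Z$, $\mathbb R^2\cong\mathbb C$. $\mathrm{Imm}=\mathrm{Imm}(S^1,\mathbb R^2)$ is the space of smooth immersions, $\mathrm{Diff}(S^1)$ acts on it by reparametrization, $B_i(S^1,\mathbb R^2)=\mathrm{Imm}/\mathrm{Diff}(S^1)$ with projection $\pi$. For $c\in\mathrm{Imm}$: $\ell(c)=\int_{S^1}|c_\theta|\,d\theta$ (invariant, so defined on $B_i$), $n_c=ic_\theta/|c_\theta|$, $\kappa_c=\det(c_\theta,c_{\theta\theta})/|c_\theta|^3$. For a smooth path $c:[0,1]\times S^1\to\mathbb R^2$ with each $c(t,\cdot)\in\mathrm{Imm}$, and $A\ge0$, $$L^{hor}_{G^A}(c)=\int_0^1\Big(\int_{S^1}(1+A\kappa_{c(t)}^2)\langle c_t,n_{c(t)}\rangle^2|c_\theta|\,d\theta\Big)^{1/2}dt,$$ and $\mathrm{dist}^{B_i}_{G^A}(C_0,C_1)$ is the infimum of $L^{hor}_{G^A}(c)$ over all such paths with $\pi(c(0,\cdot))=C_0$, $\pi(c(1,\cdot))=C_1$. *)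

(* Defs.v *)
From Stdlib Require Import Reals.
From Coquelicot Require Import Coquelicot.
Open Scope R_scope.

(* R^2 = C is represented as R * R. A function on S^1 = R/2piZ is a 2pi-periodic
   function on R. *)

Definition smooth1 (f : R -> R) : Prop := forall (n : nat) (x : R), ex_derive_n f n x.

Definition pdt (f : R -> R -> R) (t th : R) : R := Derive (fun s => f s th) t.
Definition pdth (f : R -> R -> R) (t th : R) : R := Derive (fun s => f t s) th.

Fixpoint C2k (k : nat) (f : R -> R -> R) : Prop :=
  match k with
  | O => forall t th, continuous (fun p : R * R => f (fst p) (snd p)) (t, th)
  | S m =>
      (forall t th, continuous (fun p : R * R => f (fst p) (snd p)) (t, th)) /\
      (forall t th, ex_derive (fun s => f s th) t) /\
      (forall t th, ex_derive (fun s => f t s) th) /\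
      C2k m (pdt f) /\ C2k m (pdth f)
  end.

Definition smooth2 (f : R -> R -> R) : Prop := forall k, C2k k f.

Definition is_imm (c : R -> R * R) : Prop :=
  smooth1 (fun th => fst (c th)) /\ smooth1 (fun th => snd (c th)) /\
  (forall th, c (th + 2 * PI) = c th) /\
  (forall th, (Derive (fun s => fst (c s)) th, Derive (fun s => snd (c s)) th) <> (0, 0)).

Definition ell (c : R -> R * R) : R :=
  RInt (fun th => sqrt (Derive (fun s => fst (c s)) th ^ 2
                        + Derive (fun s => snd (c s)) th ^ 2)) 0 (2 * PI).

(** Lifts to R of elements of Diff(S^1) (orientation preserving or reversing). *)
Definition is_diffS1 (phi : R -> R) : Prop :=
  smooth1 phi /\
  ((forall th, phi (th + 2 * PI) = phi th + 2 * PI) \/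
   (forall th, phi (th + 2 * PI) = phi th - 2 * PI)) /\
  (forall th, Derive phi th <> 0).

(** pi(g) = pi(c0) in B_i: g is a reparametrization of c0. *)
Definition same_orbit (c0 g : R -> R * R) : Prop :=
  exists phi, is_diffS1 phi /\ forall th, g th = c0 (phi th).

(** Paths of immersions c : [0,1] x S^1 -> R^2 (smooth maps on R x S^1;
    every smooth map on [0,1] x S^1 extends smoothly, and only t in [0,1] matters). *)
Definition cx (c : R -> R -> R * R) : R -> R -> R := fun t th => fst (c t th).
Definition cy (c : R -> R -> R * R) : R -> R -> R := fun t th => snd (c t th).

Definition speed (c : R -> R -> R * R) (t th : R) : R :=
  sqrt (pdth (cx c) t th ^ 2 + pdth (cy c) t th ^ 2).

Definition is_path (c : R -> R -> R * R) : Prop :=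
  smooth2 (cx c) /\ smooth2 (cy c) /\
  (forall t th, c t (th + 2 * PI) = c t th) /\
  (forall t th, 0 <= t <= 1 -> (pdth (cx c) t th, pdth (cy c) t th) <> (0, 0)).

Definition kappa (c : R -> R -> R * R) (t th : R) : R :=
  (pdth (cx c) t th * pdth (pdth (cy c)) t th
   - pdth (cy c) t th * pdth (pdth (cx c)) t th) / speed c t th ^ 3.

(** <c_t, n_c> with n_c = i c_theta / |c_theta| = (-y_theta, x_theta)/|c_theta| *)
Definition normal_vel (c : R -> R -> R * R) (t th : R) : R :=
  (- pdt (cx c) t th * pdth (cy c) t th + pdt (cy c) t th * pdth (cx c) t th)
  / speed c t th.

Definition Lhor (A : R) (c : R -> R -> R * R) : R :=
  RInt (fun t => sqrt (RInt (fun th =>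
          (1 + A * kappa c t th ^ 2) * normal_vel c t th ^ 2 * speed c t th)
        0 (2 * PI))) 0 1.

(** dist^{B_i}_{G^A}(pi c0, pi c1): infimum (in Rbar; +oo for the empty set). *)
Definition distBi (A : R) (c0 c1 : R -> R * R) : Rbar :=
  Glb_Rbar (fun L => exists c, is_path c /\ same_orbit c0 (c 0) /\
                               same_orbit c1 (c 1) /\ L = Lhor A c).

(* Main.v *)
Require Import Defs.
From Stdlib Require Import Reals Lra Psatz.
From Coquelicot Require Import Coquelicot.
Open Scope R_scope.

Lemma cont2_of (f : R -> R -> R) t th :
  continuous (fun p : R * R => f (fst p) (snd p)) (t, th) -> continuity_2d_pt f t th.
Proof. intro H; apply continuity_2d_pt_filterlim; exact H. Qed.

Lemma sm_cont f : smooth2 f -> forall t th, continuity_2d_pt f t th.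
Proof. intros H t th; apply cont2_of; exact (H 0%nat t th). Qed.

Lemma sm_dt f : smooth2 f -> forall t th, ex_derive (fun s => f s th) t.
Proof. intros H t th; destruct (H 1%nat) as [_ [h _]]; apply h. Qed.

Lemma sm_dth f : smooth2 f -> forall t th, ex_derive (fun s => f t s) th.
Proof. intros H t th; destruct (H 1%nat) as [_ [_ [h _]]]; apply h. Qed.

Lemma sm_pdt f : smooth2 f -> smooth2 (pdt f).
Proof. intros H k; destruct (H (S k)) as [_ [_ [_ [h _]]]]; exact h. Qed.

Lemma sm_pdth f : smooth2 f -> smooth2 (pdth f).
Proof. intros H k; destruct (H (S k)) as [_ [_ [_ [_ h]]]]; exact h. Qed.

Lemma sm_sym f : smooth2 f -> forall t th, pdt (pdth f) t th = pdth (pdt f) t th.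
Proof.
  intros H t th. unfold pdt, pdth.
  apply (Schwarz f t th).
  - exists (mkposreal 1 Rlt_0_1). intros u v _ _. repeat split.
    + apply sm_dt; auto.
    + apply sm_dth; auto.
    + apply (sm_dt (pdth f)). apply sm_pdth; auto.
    + apply (sm_dth (pdt f)). apply sm_pdt; auto.
  - apply (sm_cont (pdt (pdth f))). apply sm_pdt, sm_pdth; auto.
  - apply (sm_cont (pdth (pdt f))). apply sm_pdth, sm_pdt; auto.
Qed.

Lemma cont2_1 F t th : continuity_2d_pt F t th -> continuous (F t) th.
Proof.
  intro H. apply continuity_pt_filterlim. unfold continuity_pt, continue_in, limit1_in, limit_in. intros eps Heps.
  destruct (H (mkposreal eps Heps)) as [d Hd].
  exists d; split; [apply cond_pos|]. intros x [_ Hx]. simpl in *. unfold R_dist in *.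
  apply Hd; [rewrite Rminus_diag, Rabs_R0; apply cond_pos | exact Hx].
Qed.

Lemma cont2_0 F t th : continuity_2d_pt F t th -> continuous (fun u => F u th) t.
Proof.
  intro H. apply continuity_pt_filterlim. unfold continuity_pt, continue_in, limit1_in, limit_in. intros eps Heps.
  destruct (H (mkposreal eps Heps)) as [d Hd].
  exists d; split; [apply cond_pos|]. intros x [_ Hx]. simpl in *. unfold R_dist in *.
  apply Hd; [exact Hx | rewrite Rminus_diag, Rabs_R0; apply cond_pos].
Qed.

Lemma RIntR_minus f g a b : ex_RInt f a b -> ex_RInt g a b ->
  RInt (fun x => f x - g x) a b = RInt f a b - RInt g a b.
Proof. intros; apply (RInt_minus f g a b); auto. Qed.

Lemma RIntR_plus f g a b : ex_RInt f a b -> ex_RInt g a b ->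
  RInt (fun x => f x + g x) a b = RInt f a b + RInt g a b.
Proof. intros; apply (RInt_plus f g a b); auto. Qed.

Lemma RIntR_scal f k a b : ex_RInt f a b ->
  RInt (fun x => k * f x) a b = k * RInt f a b.
Proof. intros; apply (RInt_scal f a b k); auto. Qed.

Lemma exR_minus f g a b : ex_RInt f a b -> ex_RInt g a b ->
  ex_RInt (fun x => f x - g x) a b.
Proof. intros; apply (ex_RInt_minus (V := R_NormedModule) f g a b); auto. Qed.
Lemma exR_plus f g a b : ex_RInt f a b -> ex_RInt g a b ->
  ex_RInt (fun x => f x + g x) a b.
Proof. intros; apply (ex_RInt_plus (V := R_NormedModule) f g a b); auto. Qed.
Lemma exR_cont (f : R -> R) a b : (forall z, Rmin a b <= z <= Rmax a b -> continuous f z) -> ex_RInt f a b.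
Proof. intros; apply (@ex_RInt_continuous R_CompleteNormedModule); auto. Qed.

Lemma param_cont (F : R -> R -> R) a b t0 : a <= b ->
  (forall t th, continuity_2d_pt F t th) ->
  continuous (fun t => RInt (F t) a b) t0.
Proof.
  intros hab H.
  assert (Hex : forall t, ex_RInt (F t) a b).
  { intro t; apply (@ex_RInt_continuous R_CompleteNormedModule); intros z _; apply cont2_1, H. }
  apply continuity_pt_filterlim. unfold continuity_pt, continue_in, limit1_in, limit_in. intros eps Heps.
  assert (He' : 0 < eps / (b - a + 1)) by (apply Rdiv_lt_0_compat; lra).
  destruct (uniform_continuity_2d_1d' F a b t0 (fun x _ => H t0 x) (mkposreal _ He')) as [d Hd].
  exists d; split; [apply cond_pos|]. intros t [_ Ht]. unfold R_dist in *. simpl in *.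
  unfold Rdist in *.
  apply Rabs_lt_between' in Ht.
  rewrite <- RIntR_minus by auto.
  eapply Rle_lt_trans.
  apply (abs_RInt_le_const _ a b (eps / (b - a + 1))); auto.
  apply exR_minus; auto.
  intros th Hth. left. apply (Hd th t0 th t); auto; try lra.
  rewrite Rminus_diag, Rabs_R0; apply cond_pos.
  assert (Heq : eps = eps / (b - a + 1) * (b - a + 1)) by (field; lra).
  set (e' := eps / (b - a + 1)) in *. nra.
Qed.

Lemma c2_sq f t th : continuity_2d_pt f t th -> continuity_2d_pt (fun u v => f u v ^ 2) t th.
Proof.
  intro H. apply continuity_2d_pt_ext with (fun u v => f u v * f u v).
  intros; ring. apply continuity_2d_pt_mult; auto.
Qed.

Lemma c2_div f g t th : continuity_2d_pt f t th -> continuity_2d_pt g t th -> g t th <> 0 ->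
  continuity_2d_pt (fun u v => f u v / g u v) t th.
Proof.
  intros Hf Hg Hn. apply continuity_2d_pt_mult; auto. apply continuity_2d_pt_inv; auto.
Qed.

Lemma speed_cont c : is_path c -> forall t th, continuity_2d_pt (speed c) t th.
Proof.
  intros [hX [hY _]] t th. unfold speed.
  apply continuity_1d_2d_pt_comp with (g := fun u v => pdth (cx c) u v ^ 2 + pdth (cy c) u v ^ 2).
  apply continuity_pt_sqrt. nra.
  apply continuity_2d_pt_plus; apply c2_sq; apply sm_cont, sm_pdth; auto.
Qed.

Lemma sq_pos c t th : is_path c -> 0 <= t <= 1 ->
  0 < pdth (cx c) t th ^ 2 + pdth (cy c) t th ^ 2.
Proof.
  intros [_ [_ [_ h]]] Ht. specialize (h t th Ht).
  destruct (Req_dec (pdth (cx c) t th) 0) as [e1|n1].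
  - destruct (Req_dec (pdth (cy c) t th) 0) as [e2|n2].
    + exfalso; apply h; rewrite e1, e2; auto.
    + assert (0 < pdth (cy c) t th ^ 2) by (apply pow2_gt_0; auto). nra.
  - assert (0 < pdth (cx c) t th ^ 2) by (apply pow2_gt_0; auto). nra.
Qed.

Lemma speed_pos c t th : is_path c -> 0 <= t <= 1 -> 0 < speed c t th.
Proof. intros; unfold speed; apply sqrt_lt_R0, sq_pos; auto. Qed.

Lemma speed_ge0 c t th : 0 <= speed c t th.
Proof. apply sqrt_pos. Qed.

Lemma L_cont c : is_path c -> forall t, continuous (fun t => RInt (speed c t) 0 (2*PI)) t.
Proof.
  intros hc t. apply param_cont. pose proof PI_RGT_0; lra. apply speed_cont; auto.
Qed.

Definition dsp c t th := (pdth (cx c) t th * pdt (pdth (cx c)) t th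
   + pdth (cy c) t th * pdt (pdth (cy c)) t th) / speed c t th.

Lemma speed_derive c u th : is_path c -> 0 <= u <= 1 ->
  is_derive (fun z => speed c z th) u (dsp c u th).
Proof.
  intros hc Hu. pose proof (sq_pos c u th hc Hu) as Hp.
  pose proof (speed_pos c u th hc Hu) as Hs.
  destruct hc as [hX [hY _]].
  unfold dsp, speed in *. unfold pdt. auto_derive.
  - split; [apply (sm_dt (pdth (cx c))); apply sm_pdth; auto|].
    split; [apply (sm_dt (pdth (cy c))); apply sm_pdth; auto|]. split; [nra | exact I].
  - replace (pdth (cx c) u th * (pdth (cx c) u th * 1) + pdth (cy c) u th * (pdth (cy c) u th * 1))
      with (pdth (cx c) u th ^ 2 + pdth (cy c) u th ^ 2) by ring. field. lra.
Qed.

Lemma dsp_cont c t th : is_path c -> 0 <= t <= 1 -> continuity_2d_pt (dsp c) t th.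
Proof.
  intros hc Ht. pose proof (speed_pos c t th hc Ht).
  pose proof hc as [hX [hY _]].
  unfold dsp. apply c2_div; [| apply speed_cont; auto | lra].
  apply continuity_2d_pt_plus; apply continuity_2d_pt_mult;
    try (apply sm_cont, sm_pdth; auto); apply sm_cont, sm_pdt, sm_pdth; auto.
Qed.

Lemma loc01 t : 0 < t < 1 -> locally t (fun x => 0 < x < 1).
Proof.
  intro H. apply (locally_interval _ t (Finite 0) (Finite 1)); simpl; try lra.
  intros; lra.
Qed.

Lemma L_derive c t : is_path c -> 0 < t < 1 ->
  is_derive (fun t => RInt (speed c t) 0 (2*PI)) t (RInt (dsp c t) 0 (2*PI)).
Proof.
  intros hc Ht.
  assert (Hd : RInt (dsp c t) 0 (2*PI) = RInt (fun th => Derive (fun u => speed c u th) t) 0 (2*PI)).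
  { apply RInt_ext. intros; symmetry; apply is_derive_unique, speed_derive; auto; lra. }
  rewrite Hd.
  apply (is_derive_RInt_param (speed c) 0 (2*PI) t).
  - eapply filter_imp; [|apply (loc01 t Ht)]. intros x Hx th _.
    eexists; apply speed_derive; auto; lra.
  - intros th _.
    apply continuity_2d_pt_ext_loc with (dsp c); [| apply dsp_cont; auto; lra].
    assert (Hde : 0 < Rmin t (1 - t)) by (apply Rmin_glb_lt; lra).
    exists (mkposreal _ Hde). intros u v Hu _. simpl in Hu.
    apply Rabs_lt_between' in Hu.
    assert (0 < u < 1).
    { split; [ pose proof (Rmin_l t (1-t)) | pose proof (Rmin_r t (1-t)) ]; lra. }
    symmetry; apply is_derive_unique, speed_derive; auto; lra.
  - apply filter_forall. intro y. apply exR_cont. intros z _. apply cont2_1, speed_cont; auto.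
Qed.

Lemma Derive_shift (f : R -> R) x a : ex_derive f (x + a) ->
  Derive (fun s => f (s + a)) x = Derive f (x + a).
Proof.
  intro H. rewrite (Derive_comp f (fun s => s + a) x); auto.
  - replace (Derive (fun s => s + a) x) with 1. ring.
    symmetry; apply is_derive_unique; auto_derive; auto; ring.
  - auto_derive; auto.
Qed.

Lemma per_pdth F : smooth2 F -> (forall t s, F t (s + 2*PI) = F t s) ->
  forall t s, pdth F t (s + 2*PI) = pdth F t s.
Proof.
  intros hF hp t s. unfold pdth.
  rewrite <- Derive_shift by (apply sm_dth; auto).
  apply Derive_ext; intro; apply hp.
Qed.

Lemma per_pdt F : (forall t s, F t (s + 2*PI) = F t s) ->
  forall t s, pdt F t (s + 2*PI) = pdt F t s.
Proof.
  intros hp t s. unfold pdt. apply Derive_ext; intro; apply hp.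
Qed.

Lemma path_per c : is_path c ->
  (forall t s, cx c t (s + 2*PI) = cx c t s) /\ (forall t s, cy c t (s + 2*PI) = cy c t s).
Proof.
  intros [_ [_ [h _]]]. unfold cx, cy; split; intros; rewrite h; auto.
Qed.

Lemma deriv_unit (p q : R -> R) (dp dq x : R) : is_derive p x dp -> is_derive q x dq ->
  0 < p x ^ 2 + q x ^ 2 ->
  is_derive (fun y => p y / sqrt (p y ^ 2 + q y ^ 2)) x
    ((dp * sqrt (p x ^ 2 + q x ^ 2) ^ 2 - p x * (p x * dp + q x * dq)) / sqrt (p x ^ 2 + q x ^ 2) ^ 3).
Proof.
  intros Hp Hq Hpos.
  assert (Hs : 0 < sqrt (p x ^ 2 + q x ^ 2)) by (apply sqrt_lt_R0; auto).
  assert (Hs2 : sqrt (p x ^ 2 + q x ^ 2) ^ 2 = p x ^ 2 + q x ^ 2) by (rewrite <- Rsqr_pow2; apply Rsqr_sqrt; lra).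
  auto_derive.
  - repeat split; try (eexists; eauto). simpl in Hpos |- *. lra. apply Rgt_not_eq. simpl in Hs. exact Hs.
    replace (Derive (fun x0 : R => p x0) x) with dp by (symmetry; apply is_derive_unique; exact Hp).
    replace (Derive (fun x0 : R => q x0) x) with dq by (symmetry; apply is_derive_unique; exact Hq).
    replace (p x * (p x * 1) + q x * (q x * 1)) with (p x ^ 2 + q x ^ 2) by ring.
    set (s := sqrt (p x ^ 2 + q x ^ 2)) in *.
    field. lra.
Qed.

Lemma alg_id P Q Pth Qth Xt Yt Xtth Ytth s : s <> 0 -> s ^ 2 = P ^ 2 + Q ^ 2 ->
  Xtth * (P / s) + Xt * ((Pth * s ^ 2 - P * (P * Pth + Q * Qth)) / s ^ 3)
  + (Ytth * (Q / s) + Yt * ((Qth * s ^ 2 - Q * (P * Pth + Q * Qth)) / s ^ 3))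
  = (P * Xtth + Q * Ytth) / s + ((P * Qth - Q * Pth) / s ^ 3) * ((- Xt * Q + Yt * P) / s) * s.
Proof. intros Hs H2. rewrite H2. field. auto. Qed.

Lemma c2_pow f n t th : continuity_2d_pt f t th -> continuity_2d_pt (fun u v => f u v ^ n) t th.
Proof.
  intro H. induction n.
  - apply continuity_2d_pt_ext with (fun _ _ => 1). intros; simpl; ring. apply continuity_2d_pt_const.
  - apply continuity_2d_pt_ext with (fun u v => f u v * f u v ^ n). intros; simpl; ring.
    apply continuity_2d_pt_mult; auto.
Qed.

Lemma kappa_cont c t th : is_path c -> 0 <= t <= 1 -> continuity_2d_pt (kappa c) t th.
Proof.
  intros hc Ht. pose proof (speed_pos c t th hc Ht).
  pose proof hc as [hX [hY _]]. unfold kappa.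
  apply c2_div.
  - apply continuity_2d_pt_minus; apply continuity_2d_pt_mult;
      apply sm_cont; repeat apply sm_pdth; auto.
  - apply c2_pow, speed_cont; auto.
  - apply pow_nonzero; lra.
Qed.

Lemma nv_cont c t th : is_path c -> 0 <= t <= 1 -> continuity_2d_pt (normal_vel c) t th.
Proof.
  intros hc Ht. pose proof (speed_pos c t th hc Ht).
  pose proof hc as [hX [hY _]]. unfold normal_vel.
  apply c2_div; [| apply speed_cont; auto | lra].
  apply continuity_2d_pt_plus; apply continuity_2d_pt_mult;
    try apply continuity_2d_pt_opp; apply sm_cont;
    try apply sm_pdth; try apply sm_pdt; auto.
Qed.

Lemma per0 (F : R -> R -> R) : (forall t s, F t (s + 2*PI) = F t s) -> forall t, F t (2*PI) = F t 0.
Proof. intros h t. rewrite <- (h t 0). f_equal; ring. Qed.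

Lemma is_RInt_val (f : R -> R) a b (l l' : R) : is_RInt f a b l -> l = l' -> is_RInt f a b l'.
Proof. intros H e; subst; auto. Qed.

Lemma ibp_one t (X Y : R -> R -> R) : smooth2 X -> smooth2 Y -> 0 <= t <= 1 ->
  (forall t s, X t (s + 2*PI) = X t s) -> (forall t s, Y t (s + 2*PI) = Y t s) ->
  (forall th, 0 < pdth X t th ^ 2 + pdth Y t th ^ 2) ->
  is_RInt (fun th => pdth (pdt X) t th * (pdth X t th / sqrt (pdth X t th ^ 2 + pdth Y t th ^ 2))
     + pdt X t th * ((pdth (pdth X) t th * sqrt (pdth X t th ^ 2 + pdth Y t th ^ 2) ^ 2
          - pdth X t th * (pdth X t th * pdth (pdth X) t th + pdth Y t th * pdth (pdth Y) t th))
          / sqrt (pdth X t th ^ 2 + pdth Y t th ^ 2) ^ 3)) 0 (2*PI) 0.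
Proof.
  intros hX hY Ht pX pY Hpos.
  assert (Hsc : forall u v, 0 < pdth X u v ^ 2 + pdth Y u v ^ 2 -> continuity_2d_pt (fun u v => sqrt (pdth X u v ^ 2 + pdth Y u v ^ 2)) u v).
  { intros u v Hp. apply continuity_1d_2d_pt_comp with (g := fun u v => pdth X u v ^ 2 + pdth Y u v ^ 2).
    apply continuity_pt_sqrt. nra.
    apply continuity_2d_pt_plus; apply c2_sq; apply sm_cont, sm_pdth; auto. }
  pose proof (is_RInt_scal_derive (V := R_CompleteNormedModule)
    (fun th => pdt X t th) (fun th => pdth X t th / sqrt (pdth X t th ^ 2 + pdth Y t th ^ 2))
    (fun th => pdth (pdt X) t th)
    (fun th => (pdth (pdth X) t th * sqrt (pdth X t th ^ 2 + pdth Y t th ^ 2) ^ 2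
          - pdth X t th * (pdth X t th * pdth (pdth X) t th + pdth Y t th * pdth (pdth Y) t th))
          / sqrt (pdth X t th ^ 2 + pdth Y t th ^ 2) ^ 3) 0 (2*PI)) as H.
  eapply is_RInt_val; [apply H|]; clear H.
  - intros th _. apply Derive_correct. apply (sm_dth (pdt X)). apply sm_pdt; auto.
  - intros th _. apply deriv_unit; auto.
    apply Derive_correct. apply (sm_dth (pdth X)). apply sm_pdth; auto.
    apply Derive_correct. apply (sm_dth (pdth Y)). apply sm_pdth; auto.
  - intros th _. apply cont2_1. apply sm_cont, sm_pdth, sm_pdt; auto.
  - intros th _. apply (cont2_1 (fun u th => (pdth (pdth X) u th * sqrt (pdth X u th ^ 2 + pdth Y u th ^ 2) ^ 2
          - pdth X u th * (pdth X u th * pdth (pdth X) u th + pdth Y u th * pdth (pdth Y) u th))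
          / sqrt (pdth X u th ^ 2 + pdth Y u th ^ 2) ^ 3)). specialize (Hpos th). assert (0 < sqrt (pdth X t th ^ 2 + pdth Y t th ^ 2)) by (apply sqrt_lt_R0; auto).
    apply c2_div.
    + apply continuity_2d_pt_minus. apply continuity_2d_pt_mult. apply sm_cont, sm_pdth, sm_pdth; auto.
      apply c2_pow; apply Hsc; auto.
      apply continuity_2d_pt_mult. apply sm_cont, sm_pdth; auto.
      apply continuity_2d_pt_plus; apply continuity_2d_pt_mult; apply sm_cont; repeat apply sm_pdth; auto.
    + apply c2_pow; apply Hsc; auto.
    + apply pow_nonzero; lra.
  - rewrite (per0 (pdt X)), (per0 (pdth X)), (per0 (pdth Y)); try apply per_pdt; try apply per_pdth; auto.
    unfold minus, plus, opp, scal; simpl; unfold mult; simpl; ring.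
Qed.

Lemma K_cont c t th : is_path c -> 0 <= t <= 1 ->
  continuity_2d_pt (fun u v => kappa c u v * normal_vel c u v * speed c u v) t th.
Proof.
  intros hc Ht. apply continuity_2d_pt_mult; [apply continuity_2d_pt_mult|].
  apply kappa_cont; auto. apply nv_cont; auto. apply speed_cont; auto.
Qed.

Lemma ibp c t : is_path c -> 0 <= t <= 1 ->
  RInt (dsp c t) 0 (2*PI) = - RInt (fun th => kappa c t th * normal_vel c t th * speed c t th) 0 (2*PI).
Proof.
  intros hc Ht. pose proof hc as [hX [hY _]]. destruct (path_per c hc) as [pX pY].
  assert (Hpos : forall th, 0 < pdth (cx c) t th ^ 2 + pdth (cy c) t th ^ 2) by (intro; apply sq_pos; auto).
  assert (Hpos' : forall th, 0 < pdth (cy c) t th ^ 2 + pdth (cx c) t th ^ 2) by (intro; rewrite Rplus_comm; auto).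
  pose proof (ibp_one t (cx c) (cy c) hX hY Ht pX pY Hpos) as HX.
  pose proof (ibp_one t (cy c) (cx c) hY hX Ht pY pX Hpos') as HY.
  pose proof (is_RInt_plus _ _ _ _ _ _ HX HY) as HXY.
  apply (is_RInt_unique (V := R_CompleteNormedModule)) in HXY.
  assert (Ed : ex_RInt (dsp c t) 0 (2*PI)).
  { apply exR_cont; intros; apply cont2_1, dsp_cont; auto. }
  assert (EK : ex_RInt (fun th => kappa c t th * normal_vel c t th * speed c t th) 0 (2*PI)).
  { apply exR_cont; intros z _.
    apply (cont2_1 (fun u v => kappa c u v * normal_vel c u v * speed c u v)), K_cont; auto. }
  cut (RInt (dsp c t) 0 (2*PI) + RInt (fun th => kappa c t th * normal_vel c t th * speed c t th) 0 (2*PI) = 0).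
  { intro; lra. }
  rewrite <- RIntR_plus by auto.
  match type of HXY with RInt ?f _ _ = _ => transitivity (RInt f 0 (2*PI)) end.
  2: { rewrite HXY. unfold plus; simpl; ring. }
  apply RInt_ext. intros th _.
  unfold dsp, kappa, normal_vel, speed, plus, scal; simpl. unfold mult; simpl.
  rewrite (Rplus_comm (pdth (cy c) t th ^ 2)).
  rewrite !sm_sym by auto.
  pose proof (Hpos th) as Hpt. clear HXY HX HY Hpos Hpos' Ed EK.
  set (P := pdth (cx c) t th) in *. set (Q := pdth (cy c) t th) in *.
  set (Pth := pdth (pdth (cx c)) t th). set (Qth := pdth (pdth (cy c)) t th).
  set (Xt := pdt (cx c) t th). set (Yt := pdt (cy c) t th).
  set (Xtth := pdth (pdt (cx c)) t th). set (Ytth := pdth (pdt (cy c)) t th).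
  assert (Hs : 0 < sqrt (P ^ 2 + Q ^ 2)) by (apply sqrt_lt_R0; apply Hpt).
  set (s := sqrt (P ^ 2 + Q ^ 2)) in *.
  assert (Hs2 : s ^ 2 = P ^ 2 + Q ^ 2) by (unfold s; rewrite <- Rsqr_pow2; apply Rsqr_sqrt; lra).
  replace (P * (P * 1) + Q * (Q * 1)) with (P ^ 2 + Q ^ 2) by ring.
  replace (P * (P * 1) + Q ^ 2) with (P ^ 2 + Q ^ 2) by ring.
  fold s. replace (s * (s * 1)) with (P ^ 2 + Q ^ 2) by (rewrite <- Hs2; ring).
  field. lra.
Qed.

Lemma amgm_inf x a b : 0 <= a -> 0 <= b ->
  (forall l, 0 < l -> x <= (l * a + b / l) / 2) -> x <= sqrt (a * b).
Proof.
  intros Ha Hb H.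
  destruct (Rle_lt_or_eq_dec 0 a Ha) as [Ha'|Ha'].
  - destruct (Rle_lt_or_eq_dec 0 b Hb) as [Hb'|Hb'].
    + assert (Hsa : 0 < sqrt a) by (apply sqrt_lt_R0; auto).
      assert (Hsb : 0 < sqrt b) by (apply sqrt_lt_R0; auto).
      specialize (H (sqrt b / sqrt a) (Rdiv_lt_0_compat _ _ Hsb Hsa)).
      rewrite sqrt_mult by lra.
      replace ((sqrt b / sqrt a * a + b / (sqrt b / sqrt a)) / 2) with (sqrt a * sqrt b) in H; auto.
      assert (E : forall sa sb, 0 < sa -> 0 < sb -> sa * sb = (sb / sa * (sa * sa) + (sb * sb) / (sb / sa)) / 2)
        by (intros; field; lra).
      specialize (E (sqrt a) (sqrt b) Hsa Hsb). rewrite !sqrt_sqrt in E by lra. exact E.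
    + subst b. rewrite Rmult_0_r, sqrt_0.
      destruct (Rle_or_lt x 0) as [|Hx]; auto.
      specialize (H (x / a) (Rdiv_lt_0_compat _ _ Hx Ha')).
      replace ((x / a * a + 0 / (x / a)) / 2) with (x / 2) in H by (field; lra). lra.
  - subst a. rewrite Rmult_0_l, sqrt_0.
    destruct (Rle_or_lt x 0) as [|Hx]; auto.
    assert (Hl : 0 < (b + 1) / x) by (apply Rdiv_lt_0_compat; lra).
    specialize (H _ Hl).
    replace (((b + 1) / x * 0 + b / ((b + 1) / x)) / 2) with (x * (b / (2 * (b + 1)))) in H by (field; lra).
    assert (b / (2 * (b + 1)) < 1).
    { apply (Rmult_lt_reg_r (2 * (b + 1))); [lra|]. unfold Rdiv; rewrite Rmult_assoc, Rinv_l; lra. }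
    nra.
Qed.

Definition JI (c : R -> R -> R * R) (A t th : R) :=
  (1 + A * kappa c t th ^ 2) * normal_vel c t th ^ 2 * speed c t th.

Lemma JI_cont c A t th : is_path c -> 0 <= t <= 1 -> continuity_2d_pt (JI c A) t th.
Proof.
  intros hc Ht. unfold JI.
  apply continuity_2d_pt_mult; [apply continuity_2d_pt_mult|].
  - apply continuity_2d_pt_plus. apply continuity_2d_pt_const.
    apply continuity_2d_pt_mult. apply continuity_2d_pt_const. apply c2_pow, kappa_cont; auto.
  - apply c2_pow, nv_cont; auto.
  - apply speed_cont; auto.
Qed.

Lemma L_pos c t : is_path c -> 0 <= t <= 1 -> 0 < RInt (speed c t) 0 (2*PI).
Proof.
  intros hc Ht. pose proof PI_RGT_0. apply RInt_gt_0. lra.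
  intros; apply speed_pos; auto. intros; apply cont2_1, speed_cont; auto.
Qed.

Lemma key_bound c A t : is_path c -> 0 < A -> 0 <= t <= 1 ->
  RInt (dsp c t) 0 (2*PI) / (2 * sqrt (RInt (speed c t) 0 (2*PI)))
  <= / (2 * sqrt A) * sqrt (RInt (JI c A t) 0 (2*PI)).
Proof.
  intros hc hA Ht. pose proof PI_RGT_0 as Hpi.
  set (Kf := fun th => kappa c t th * normal_vel c t th * speed c t th).
  set (If := fun th => kappa c t th ^ 2 * normal_vel c t th ^ 2 * speed c t th).
  assert (cK : forall th, continuous Kf th).
  { intro th. apply (cont2_1 (fun u v => kappa c u v * normal_vel c u v * speed c u v)), K_cont; auto. }
  assert (cI : forall th, continuous If th).
  { intro th. apply (cont2_1 (fun u v => kappa c u v ^ 2 * normal_vel c u v ^ 2 * speed c u v)).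
    apply continuity_2d_pt_mult; [apply continuity_2d_pt_mult|]; try apply c2_pow.
    apply kappa_cont; auto. apply nv_cont; auto. apply speed_cont; auto. }
  assert (cS : forall th, continuous (speed c t) th) by (intro; apply cont2_1, speed_cont; auto).
  assert (cJ : forall th, continuous (JI c A t) th) by (intro; apply cont2_1, JI_cont; auto).
  assert (eK : ex_RInt Kf 0 (2*PI)) by (apply exR_cont; auto).
  assert (eI : ex_RInt If 0 (2*PI)) by (apply exR_cont; auto).
  assert (eS : ex_RInt (speed c t) 0 (2*PI)) by (apply exR_cont; auto).
  assert (eJ : ex_RInt (JI c A t) 0 (2*PI)) by (apply exR_cont; auto).
  pose (L := RInt (speed c t) 0 (2*PI) : R). pose (I := RInt If 0 (2*PI) : R).
  pose (J := RInt (JI c A t) 0 (2*PI) : R). fold L I J.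
  assert (HL : 0 < L) by (apply L_pos; auto).
  assert (HI : 0 <= I).
  { apply RInt_ge_0; auto; try lra. intros; unfold If.
    apply Rmult_le_pos; [apply Rmult_le_pos; apply pow2_ge_0 | apply speed_ge0]. }
  assert (HIJ : A * I <= J).
  { unfold I, J. rewrite <- RIntR_scal by auto. apply RInt_le; auto; try lra.
    apply (ex_RInt_scal (V := R_NormedModule) If 0 (2*PI) A); auto.
    intros th _. unfold If, JI.
    pose proof (pow2_ge_0 (normal_vel c t th)). pose proof (pow2_ge_0 (kappa c t th)).
    pose proof (speed_ge0 c t th).
    assert (0 <= normal_vel c t th ^ 2 * speed c t th) by (apply Rmult_le_pos; auto). nra. }
  assert (HLp : RInt (dsp c t) 0 (2*PI) <= sqrt (I * L)).
  { rewrite ibp by auto. apply amgm_inf; try lra.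
    intros l Hl.
    assert (E : (l * I + L / l) / 2 = RInt (fun th => (l / 2) * If th + (/ (2 * l)) * speed c t th) 0 (2*PI)).
    { rewrite RIntR_plus, !RIntR_scal; auto. unfold I, L. field. lra.
      apply (ex_RInt_scal (V := R_NormedModule) If 0 (2*PI)); auto.
      apply (ex_RInt_scal (V := R_NormedModule) (speed c t) 0 (2*PI)); auto. }
    rewrite E.
    replace (- RInt (fun th : R => kappa c t th * normal_vel c t th * speed c t th) 0 (2 * PI))
      with (RInt (fun th => (-1) * Kf th) 0 (2*PI)).
    2: { rewrite RIntR_scal by auto. unfold Kf. assert (Hm : forall u : R, -1 * u = - u) by (intro; ring); apply Hm. }
    apply RInt_le; try lra.
    apply (ex_RInt_scal (V := R_NormedModule) Kf 0 (2*PI)); auto.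
    apply exR_plus; apply (ex_RInt_scal (V := R_NormedModule)); auto.
    intros th _. unfold Kf, If.
    pose proof (speed_ge0 c t th) as Hs.
    set (k := kappa c t th). set (n := normal_vel c t th). set (s := speed c t th).
    apply (Rmult_le_reg_l (2 * l)); [lra|].
    replace (2 * l * (l / 2 * (k ^ 2 * n ^ 2 * s) + / (2 * l) * s)) with (s * ((l * k * n) ^ 2 + 1)) by (field; lra).
    assert (0 <= s * (l * k * n + 1) ^ 2) by (apply Rmult_le_pos; auto; apply pow2_ge_0).
    nra. }
  assert (HsL : 0 < sqrt L) by (apply sqrt_lt_R0; auto).
  assert (HsA : 0 < sqrt A) by (apply sqrt_lt_R0; auto).
  assert (HsI : sqrt I <= sqrt J / sqrt A).
  { rewrite <- sqrt_div_alt by auto. apply sqrt_le_1_alt.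
    apply (Rmult_le_reg_l A); auto. unfold Rdiv. rewrite <- Rmult_assoc, (Rmult_comm A J), Rmult_assoc, Rinv_r; lra. }
  rewrite sqrt_mult in HLp by lra.
  pose (D := RInt (dsp c t) 0 (2*PI) : R). fold D in HLp |- *.
  apply (Rmult_le_reg_l (2 * sqrt L)); [lra|].
  replace (2 * sqrt L * (D / (2 * sqrt L))) with D by (field; lra).
  replace (2 * sqrt L * (/ (2 * sqrt A) * sqrt J)) with (sqrt J / sqrt A * sqrt L) by (field; lra).
  eapply Rle_trans; [exact HLp|]. apply Rmult_le_compat_r; lra.
Qed.

Definition clamp t := Rmax 0 (Rmin 1 t).

Lemma clamp_in t : 0 <= clamp t <= 1.
Proof. unfold clamp, Rmax, Rmin; repeat destruct Rle_dec; lra. Qed.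

Lemma clamp_id t : 0 <= t <= 1 -> clamp t = t.
Proof. intro; unfold clamp, Rmax, Rmin; repeat destruct Rle_dec; lra. Qed.

Lemma clamp_lip u t : Rabs (clamp u - clamp t) <= Rabs (u - t).
Proof.
  unfold clamp, Rmax, Rmin; repeat destruct Rle_dec;
  unfold Rabs; repeat destruct Rcase_abs; lra.
Qed.

Lemma c2_clamp F t th : (forall u v, 0 <= u <= 1 -> continuity_2d_pt F u v) ->
  continuity_2d_pt (fun u v => F (clamp u) v) t th.
Proof.
  intros H eps. destruct (H (clamp t) th (clamp_in t) eps) as [d Hd].
  exists d. intros u v Hu Hv. apply Hd; auto.
  eapply Rle_lt_trans; [apply clamp_lip|]; auto.
Qed.

Lemma is_derive_Rminus (f g : R -> R) x df dg : is_derive f x df -> is_derive g x dg ->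
  is_derive (fun y => f y - g y) x (df - dg).
Proof. intros; apply (is_derive_minus f g x df dg); auto. Qed.

Lemma JI_ge0 c A t th : 0 < A -> 0 <= JI c A t th.
Proof.
  intro hA. unfold JI. pose proof (pow2_ge_0 (kappa c t th)). pose proof (pow2_ge_0 (normal_vel c t th)).
  pose proof (speed_ge0 c t th). apply Rmult_le_pos; [apply Rmult_le_pos|]; nra.
Qed.

Lemma path_bound c A : is_path c -> 0 < A ->
  sqrt (ell (c 1)) - sqrt (ell (c 0)) <= / (2 * sqrt A) * Lhor A c.
Proof.
  intros hc hA. pose proof PI_RGT_0 as Hpi.
  pose (Lf := fun t => RInt (speed c t) 0 (2*PI) : R).
  pose (gt := fun t => sqrt (RInt (JI c A (clamp t)) 0 (2*PI)) : R).
  assert (cg : forall t, continuous gt t).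
  { intro t. unfold gt. apply continuous_sqrt_comp.
    apply (param_cont (fun u v => JI c A (clamp u) v)). lra.
    intros u v. apply c2_clamp. intros; apply JI_cont; auto. }
  pose (G := fun t => RInt gt 0 t : R).
  assert (dG : forall x, is_derive G x (gt x)).
  { intro x. apply (is_derive_RInt gt G 0 x); auto.
    apply filter_forall. intro b. apply (RInt_correct (V := R_CompleteNormedModule)).
    apply exR_cont; auto. }
  pose (k := / (2 * sqrt A)).
  pose (Hf := fun t => sqrt (Lf t) - k * G t).
  pose (df := fun t => RInt (dsp c t) 0 (2*PI) / (2 * sqrt (Lf t)) - k * gt t).
  destruct (MVT_gen Hf 0 1 df) as [c0 [Hc0 Hmvt]].
  - rewrite Rmin_left, Rmax_right by lra. intros x Hx.
    apply is_derive_Rminus.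
    + apply (is_derive_sqrt Lf x). apply L_derive; auto. apply L_pos; auto; lra.
    + apply is_derive_scal; auto.
  - rewrite Rmin_left, Rmax_right by lra. intros x Hx.
    apply continuity_pt_filterlim. unfold Hf.
    apply (continuous_minus (fun t => sqrt (Lf t)) (fun t => k * G t)).
    + apply continuous_sqrt_comp. apply L_cont; auto.
    + apply (continuous_scal_r k G). apply ex_derive_continuous. eexists; apply dG.
  - rewrite Rmin_left, Rmax_right in Hc0 by lra.
    assert (Hdf : df c0 <= 0).
    { unfold df, gt. rewrite clamp_id by auto.
      pose proof (key_bound c A c0 hc hA Hc0). unfold k, Lf. apply Rle_minus; exact H. }
    assert (HG0 : G 0 = 0) by (unfold G; rewrite RInt_point; reflexivity).
    assert (HG1 : G 1 = Lhor A c).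
    { unfold G, Lhor. apply RInt_ext. intros x Hx. rewrite Rmin_left, Rmax_right in Hx by lra.
      unfold gt. rewrite clamp_id by lra. reflexivity. }
    unfold Hf in Hmvt. rewrite HG0 in Hmvt.
    change (ell (c 1)) with (Lf 1). change (ell (c 0)) with (Lf 0).
    rewrite <- HG1. fold k. nra.
Qed.

Lemma eq_sub (a b c : R) : a + b = c -> b = c - a.
Proof. intros; lra. Qed.

Lemma shift_int (F : R -> R) : (forall u, continuous F u) -> (forall u, F (u + 2*PI) = F u) ->
  forall u, RInt F u (u + 2*PI) = RInt F 0 (2*PI).
Proof.
  intros cF pF u.
  assert (ex : forall a b, ex_RInt F a b) by (intros; apply exR_cont; auto).
  pose (Phi := fun x => RInt F 0 x : R).
  assert (dPhi : forall x, is_derive Phi x (F x)).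
  { intro x. apply (is_derive_RInt F Phi 0 x); auto.
    apply filter_forall. intro b. apply (RInt_correct (V := R_CompleteNormedModule)); auto. }
  pose (h := fun x => Phi (x + 2*PI) - Phi x).
  assert (Eh : forall x, RInt F x (x + 2*PI) = h x).
  { intro x. unfold h, Phi. pose proof (RInt_Chasles F 0 x (x + 2*PI) (ex _ _) (ex _ _)) as HC.
    apply eq_sub. exact HC. }
  assert (dh : forall x, is_derive h x 0).
  { intro x. replace 0 with (F (x + 2*PI) * 1 - F x) by (rewrite pF; ring).
    apply is_derive_Rminus; auto.
    assert (H1 : is_derive (fun y => y + 2*PI) x 1) by (auto_derive; auto; ring).
    pose proof (is_derive_comp Phi (fun y => y + 2*PI) x (F (x + 2*PI)) 1 (dPhi _) H1) as H2.
    unfold scal in H2; simpl in H2; unfold mult in H2; simpl in H2.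
    replace (F (x + 2*PI) * 1) with (1 * F (x + 2*PI)) by ring. exact H2. }
  destruct (MVT_gen h 0 u (fun _ => 0)) as [c0 [_ Hm]].
  - intros; apply dh.
  - intros. apply continuity_pt_filterlim. apply (ex_derive_continuous h). eexists; apply dh.
  - rewrite Eh. replace (RInt F 0 (2*PI)) with (RInt F 0 (0 + 2*PI)) by (f_equal; ring). rewrite Eh. lra.
Qed.

Definition spd (c0 : R -> R * R) u :=
  sqrt (Derive (fun s => fst (c0 s)) u ^ 2 + Derive (fun s => snd (c0 s)) u ^ 2).

Lemma smooth1_d f x : smooth1 f -> ex_derive f x.
Proof. intro H. exact (H 1%nat x). Qed.

Lemma smooth1_dd f x : smooth1 f -> ex_derive (Derive f) x.
Proof. intro H. exact (H 2%nat x). Qed.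

Lemma smooth1_cd f x : smooth1 f -> continuous (Derive f) x.
Proof. intro H. apply (ex_derive_continuous (Derive f)), smooth1_dd; auto. Qed.

Lemma spd_cont c0 u : is_imm c0 -> continuous (spd c0) u.
Proof.
  intros [h1 [h2 _]]. unfold spd. apply continuous_sqrt_comp.
  apply (continuous_plus (fun u => Derive (fun s => fst (c0 s)) u ^ 2) (fun u => Derive (fun s => snd (c0 s)) u ^ 2));
  apply (continuous_mult (fun u => Derive _ u) (fun u => Derive _ u ^ 1));
  try apply (continuous_mult (fun u => Derive _ u) (fun u => 1)); try apply continuous_const;
  apply smooth1_cd; auto.
Qed.

Lemma spd_per c0 u : is_imm c0 -> spd c0 (u + 2*PI) = spd c0 u.
Proof.
  intros [h1 [h2 [hp _]]]. unfold spd.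
  rewrite <- !Derive_shift by (apply smooth1_d; auto).
  rewrite (Derive_ext (fun s => fst (c0 (s + 2*PI))) (fun s => fst (c0 s))) by (intro; rewrite hp; auto).
  rewrite (Derive_ext (fun s => snd (c0 (s + 2*PI))) (fun s => snd (c0 s))) by (intro; rewrite hp; auto).
  reflexivity.
Qed.

Lemma eqR (u v : R) : u = v -> u = v.
Proof. auto. Qed.

Lemma sign_const (f : R -> R) : (forall x, continuous f x) -> (forall x, f x <> 0) ->
  (forall x, 0 < f x) \/ (forall x, f x < 0).
Proof.
  intros cf nz. destruct (Rlt_or_le 0 (f 0)) as [H0|H0].
  - left. intro x. destruct (Rlt_or_le 0 (f x)) as [|Hx]; auto. exfalso.
    destruct (IVT_gen_consistent f 0 x 0 cf) as [z [_ Hz]].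
    + split; [apply Rle_trans with (f x); [apply Rmin_r|auto] | apply Rle_trans with (f 0); [lra|apply Rmax_l]].
    + apply (nz z Hz).
  - right. intro x. assert (f 0 < 0) by (destruct H0; auto; exfalso; apply (nz 0); auto).
    destruct (Rlt_or_le (f x) 0) as [|Hx]; auto. exfalso.
    destruct (IVT_gen_consistent f 0 x 0 cf) as [z [_ Hz]].
    + split; [apply Rle_trans with (f 0); [apply Rmin_l|lra] | apply Rle_trans with (f x); [auto|apply Rmax_r]].
    + apply (nz z Hz).
Qed.

Lemma reparam c0 g : is_imm c0 -> same_orbit c0 g -> ell g = ell c0.
Proof.
  intros hc [phi [[sphi [hper hd]] hg]].
  pose proof hc as [h1 [h2 [hp _]]].
  pose proof PI_RGT_0 as Hpi.
  transitivity (RInt (spd c0) 0 (2*PI)); [| reflexivity].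
  assert (dphi : forall x, is_derive phi x (Derive phi x)) by (intro; apply Derive_correct, smooth1_d; auto).
  assert (cdphi : forall x, continuous (Derive phi) x) by (intro; apply smooth1_cd; auto).
  assert (cF : forall u, continuous (spd c0) u) by (intro; apply spd_cont; auto).
  assert (cFp : forall x, continuous (fun th => Derive phi th * spd c0 (phi th)) x).
  { intro x. apply (continuous_mult (Derive phi) (fun th => spd c0 (phi th))); auto.
    apply (continuous_comp phi (spd c0)); auto. apply (ex_derive_continuous phi). eexists; apply dphi. }
  assert (E1 : ell g = RInt (fun th => Rabs (Derive phi th) * spd c0 (phi th)) 0 (2*PI)).
  { unfold ell. apply RInt_ext. intros th _.
    rewrite (Derive_ext (fun s => fst (g s)) (fun s => fst (c0 (phi s)))) by (intro; rewrite hg; auto).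
    rewrite (Derive_ext (fun s => snd (g s)) (fun s => snd (c0 (phi s)))) by (intro; rewrite hg; auto).
    rewrite (Derive_comp (fun s => fst (c0 s)) phi) by (apply smooth1_d; auto).
    rewrite (Derive_comp (fun s => snd (c0 s)) phi) by (apply smooth1_d; auto).
    unfold spd. set (d := Derive phi th).
    set (a := Derive (fun s => fst (c0 s)) (phi th)). set (b := Derive (fun s => snd (c0 s)) (phi th)).
    replace ((d * a) ^ 2 + (d * b) ^ 2) with (Rsqr d * (a ^ 2 + b ^ 2)) by (unfold Rsqr; ring).
    rewrite sqrt_mult by (try apply Rle_0_sqr; nra). rewrite sqrt_Rsqr_abs. reflexivity. }
  rewrite E1.
  assert (Hcomp : RInt (fun th => Derive phi th * spd c0 (phi th)) 0 (2*PI) = RInt (spd c0) (phi 0) (phi (2*PI))).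
  { apply (RInt_comp (V := R_CompleteNormedModule) (spd c0) phi (Derive phi)).
    intros; auto. intros; split; auto. }
  assert (Hp2 : phi (2*PI) = phi 0 + 2*PI \/ phi (2*PI) = phi 0 - 2*PI).
  { replace (2*PI) with (0 + 2*PI) by ring. destruct hper as [h|h]; [left|right]; rewrite h; ring. }
  destruct (MVT_gen phi 0 (2*PI) (Derive phi)) as [xi [_ Hxi]].
  { intros; auto. } { intros; apply continuity_pt_filterlim, (ex_derive_continuous phi). eexists; apply dphi. }
  destruct (sign_const (Derive phi) cdphi hd) as [Hs|Hs].
  - rewrite (RInt_ext _ (fun th => Derive phi th * spd c0 (phi th))).
    2: { intros x _. rewrite Rabs_pos_eq; auto. left; auto. }
    rewrite Hcomp.
    destruct Hp2 as [Hp2|Hp2].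
    + rewrite Hp2. apply shift_int; auto. intro; apply spd_per; auto.
    + exfalso. specialize (Hs xi). rewrite Hp2 in Hxi. nra.
  - rewrite (RInt_ext _ (fun th => (-1) * (Derive phi th * spd c0 (phi th)))).
    2: { intros x _. apply eqR. rewrite Rabs_left; auto. ring. }
    rewrite RIntR_scal by (apply exR_cont; auto).
    rewrite Hcomp.
    destruct Hp2 as [Hp2|Hp2].
    + exfalso. specialize (Hs xi). rewrite Hp2 in Hxi. nra.
    + rewrite Hp2.
      rewrite <- (opp_RInt_swap (V := R_CompleteNormedModule)) by (apply exR_cont; auto).
      unfold opp; simpl.
      transitivity (RInt (spd c0) (phi 0 - 2*PI) (phi 0 - 2*PI + 2*PI)).
      * replace (phi 0 - 2*PI + 2*PI) with (phi 0) by ring. ring.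
      * apply shift_int; auto. intro; apply spd_per; auto.
Qed.

Theorem proposition3p3 (A : R) (hA : 0 < A) (c0 c1 : R -> R * R)
  (h0 : is_imm c0) (h1 : is_imm c1) :
  Rbar_le (Finite (sqrt (ell c1) - sqrt (ell c0)))
          (Rbar_mult (Finite (/ (2 * sqrt A))) (distBi A c0 c1)).
Proof.
  assert (HsA : 0 < sqrt A) by (apply sqrt_lt_R0; auto).
  set (k := / (2 * sqrt A)).
  assert (Hk : 0 < k) by (unfold k; apply Rinv_0_lt_compat; lra).
  set (x := sqrt (ell c1) - sqrt (ell c0)).
  assert (Hlb : Rbar_le (Finite (x / k)) (distBi A c0 c1)).
  { unfold distBi. apply Glb_Rbar_correct.
    intros L [c [hc [o0 [o1 EL]]]]. simpl. subst L.
    pose proof (path_bound c A hc hA) as HB.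
    rewrite (reparam c1 (c 1)), (reparam c0 (c 0)) in HB by auto.
    fold k x in HB. apply (Rmult_le_reg_l k); auto.
    replace (k * (x / k)) with x by (field; lra). exact HB. }
  destruct (distBi A c0 c1) as [y| |]; simpl in Hlb |- *.
  - apply (Rmult_le_reg_l (/ k)). apply Rinv_0_lt_compat; auto.
    replace (/ k * (k * y)) with y by (field; lra). rewrite Rmult_comm. exact Hlb.
  - destruct (Rle_dec 0 k) as [H|H]; [| lra].
    destruct (Rle_lt_or_eq_dec 0 k H) as [H'|H']; simpl; auto. lra.
  - destruct Hlb.
Qed.
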